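(* Let $C$ be a set of colors and $W\subseteq C^\omega$ any winning condition. For any positive integers $n,q$, any $n$-node arena $\mathcal{A}$ over $C$, and any $q$-state strategy $S_1$ of Player 0 in $\mathcal{A}$, there exists a chromatic $(q+1)^n$-state strategy $S_2$ of Player 0 in $\mathcal{A}$ such that for every node $v$ of $\mathcal{A}$: if $S_1$ is winning from $v$ w.r.t. $W$, then so is $S_2$.
   Context: An arena over a set of colors $C$ is a tuple $\mathcal{A} = \langle V, V_0, V_1, E\rangle$ of finite sets with $V = V_0 \sqcup V_1$, $E \subseteq V \times C \times V$, and every node having at least one outgoing edge; for $e=(s,c,t)$ write $\mathsf{source}(e)=s$, $\mathsf{col}(e)=c$, $\mathsf{target}(e)=t$. A path is a nonempty finite or infinite sequence of edges $e_1e_2\ldots$ with $\mathsf{target}(e_i)=\mathsf{source}(e_{i+1})$; for each node $v$ there is also a $0$-length path $\lambda_v$ with source and target $v$. $\mathsf{col}$ extends letterwise to sequences of edges. A strategy of Player 0 is a function $S$ assigning to each finite path $p$ with $\mathsf{target}(p)\in V_0$ an edge $S(p)$ with $\mathsf{source}(S(p))=\mathsf{target}(p)$. A path $p=e_1e_2\ldots$ is consistent with $S$ if (when $\mathsf{source}(p)\in V_0$) $e_1=S(\lambda_{\mathsf{source}(p)})$ and for each $1\le i<|p|$ with $\mathsf{target}(e_i)\in V_0$ we have $e_{i+1}=S(e_1\ldots e_i)$. For $v\in V$, $\mathsf{col}(S,v)\subseteq C^\omega$ is the set of $\mathsf{col}(p)$ over all infinite paths $p$ from $v$ consistent with $S$.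 $S$ is winning from $v$ w.r.t. $W$ if $\mathsf{col}(S,v)\subseteq W$. A memory structure is $\mathcal{M}=\langle M, m_{init},\delta\rangle$ with $M$ finite, $m_{init}\in M$, $\delta: M\times E\to M$ (extended to finite edge sequences in the usual way). $S$ is an $\mathcal{M}$-strategy if for all finite paths $p_1,p_2$ with $\mathsf{target}(p_1)=\mathsf{target}(p_2)\in V_0$, $\delta(m_{init},p_1)=\delta(m_{init},p_2)$ implies $S(p_1)=S(p_2)$. $\mathcal{M}$ is chromatic if there is $\sigma: M\times C\to M$ with $\delta(m,e)=\sigma(m,\mathsf{col}(e))$ for all $m,e$. A (chromatic) $q$-state strategy is an $\mathcal{M}$-strategy for some (chromatic) memory structure $\mathcal{M}$ with $|M|=q$. *)

(* Defs.v *)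
From mathcomp Require Import all_boot.
Set Implicit Arguments. Unset Strict Implicit. Unset Printing Implicit Defensive.

(* An arena over colors C: finite node set V, Player-0 nodes V0 (V1 = ~: V0),
   a finite set of edges given as a finite type with source/color/target maps;
   injectivity of (source, col, target) makes E a genuine subset of V x C x V. *)
Record arena (C : Type) := Arena {
  node : finType;
  V0 : {set node};
  edge : finType;
  source : edge -> node;
  col : edge -> C;
  target : edge -> node;
  edge_inj : injective (fun e => (source e, col e, target e));
  out_edge : forall v : node, exists e : edge, source e = v
}.

Section Games.
Variables (C : Type) (A : arena C).
Notation V := (node A).
Notation E := (edge A).

(* A finite path is represented by its start node v and its edge list s
   (s = [::] is the 0-length path lambda_v). *)
Definition is_fpath (v : V) (s : seq E) : bool :=
  match s with
  | [::] => true
  | e :: s' => (source e == v) && path (fun a b => target a == source b) e s'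
  end.

Definition ptarget (v : V) (s : seq E) : V := last v (map (@target _ A) s).

(* A strategy of Player 0: a function on finite paths; it must give an edge
   out of the target for every finite path whose target is in V0. Values on
   non-paths are irrelevant. *)
Definition strategy := V -> seq E -> E.

Definition is_strategy (S : strategy) : Prop :=
  forall v s, is_fpath v s -> ptarget v s \in V0 A -> source (S v s) = ptarget v s.

Definition consistent_inf (S : strategy) (v : V) (p : nat -> E) : Prop :=
  source (p 0) = v /\
  (forall i, target (p i) = source (p i.+1)) /\
  (v \in V0 A -> p 0 = S v [::]) /\
  (forall i, target (p i) \in V0 A -> p i.+1 = S v (mkseq p i.+1)).

Definition col_set (S : strategy) (v : V) (w : nat -> C) : Prop :=
  exists p, consistent_inf S v p /\ w = (fun i => col (p i)).

Definition winning_from (S : strategy) (v : V) (W : (nat -> C) -> Prop) : Prop :=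
  forall w, col_set S v w -> W w.

Record memory := Memory {
  mstate : finType;
  m_init : mstate;
  delta : mstate -> E -> mstate
}.

Definition delta_seq (M : memory) (m : mstate M) (s : seq E) : mstate M :=
  foldl (@delta M) m s.

Definition is_M_strategy (M : memory) (S : strategy) : Prop :=
  forall v1 s1 v2 s2, is_fpath v1 s1 -> is_fpath v2 s2 ->
    ptarget v1 s1 = ptarget v2 s2 -> ptarget v1 s1 \in V0 A ->
    delta_seq (m_init M) s1 = delta_seq (m_init M) s2 ->
    S v1 s1 = S v2 s2.

Definition chromatic (M : memory) : Prop :=
  exists sigma : mstate M -> C -> mstate M,
    forall m e, delta m e = sigma m (col e).

Definition q_state_strategy (q : nat) (S : strategy) : Prop :=
  is_strategy S /\ exists M : memory, #|mstate M| = q /\ is_M_strategy M S.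

Definition chromatic_q_state_strategy (q : nat) (S : strategy) : Prop :=
  is_strategy S /\
  exists M : memory, #|mstate M| = q /\ chromatic M /\ is_M_strategy M S.

End Games.

(* Main.v *)
Require Import Defs.
From mathcomp Require Import all_boot.
From Stdlib Require Import ClassicalEpsilon Classical FunctionalExtensionality.
Set Implicit Arguments. Unset Strict Implicit. Unset Printing Implicit Defensive.

Section Paths.
Variables (C : Type) (A : arena C).

Lemma ptarget_rcons (v : node A) s e : ptarget v (rcons s e) = target e.
Proof. by rewrite /ptarget map_rcons last_rcons. Qed.

Lemma fpath_rcons (v : node A) s e :
  is_fpath v (rcons s e) = is_fpath v s && (source e == ptarget v s).
Proof.
case: s => [|x s] //=; first by rewrite andbT.
rewrite rcons_path /ptarget /= last_map andbA.
by rewrite [source e == _]eq_sym.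
Qed.

Lemma mkseq_path (v : node A) (p : nat -> edge A) :
  source (p 0) = v -> (forall i, target (p i) = source (p i.+1)) ->
  forall k, is_fpath v (mkseq p k) /\ ptarget v (mkseq p k) = source (p k).
Proof.
move=> H0 Hs; elim=> [|k [IH1 IH2]]; first by rewrite /= /ptarget.
rewrite mkseqS (fpath_rcons v) (ptarget_rcons v) IH1 IH2 eqxx; split=> //.
Qed.
End Paths.

Lemma stab (g : nat -> nat) : (forall d, g d.+1 <= g d) ->
  exists d0, forall d, d0 <= d -> g d = g d0.
Proof.
move=> Hg.
suff H : forall n k, g k <= n -> exists d0, forall d, d0 <= d -> g d = g d0.
  exact: (H (g 0) 0).
elim=> [|n IH] k Hk.
  exists k => d Hd; have Hm : forall j, g (k + j) <= g k.
    by elim=> [|j IHj]; rewrite ?addn0 // addnS (leq_trans (Hg _)).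
  by rewrite -(subnKC Hd); apply/eqP; rewrite eqn_leq Hm /=; move: (Hm (d-k)); rewrite leqn0 in Hk; rewrite (eqP Hk) leqn0 => /eqP ->.
have Hm : forall j, g (k + j) <= g k.
  by elim=> [|j IHj]; rewrite ?addn0 // addnS (leq_trans (Hg _)).
case: (classic (forall d, k <= d -> g d = g k)) => [H|H]; first by exists k.
have [d Hd] : exists d, ~ (k <= d -> g d = g k).
  by apply: not_all_ex_not.
have [Hkd Hne] : k <= d /\ g d <> g k by split; [apply: NNPP => /negP/negbTE Hc; apply: Hd; rewrite Hc|move=> He; apply: Hd].
apply: (IH d); move: (Hm (d - k)); rewrite subnKC // => Hle.
have : g d < g k by rewrite ltn_neqAle Hle andbT; apply/eqP.
move=> Hlt; rewrite -ltnS; exact: leq_trans Hlt Hk.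
Qed.

Lemma dec_inter (T : finType) (X : nat -> {set T}) :
  (forall d, X d.+1 \subset X d) -> (forall d, X d != set0) ->
  exists x, forall d, x \in X d.
Proof.
move=> Hsub Hne.
have Hmono : forall d j, X (d + j) \subset X d.
  move=> d; elim=> [|j IH]; first by rewrite addn0.
  by rewrite addnS (subset_trans (Hsub _)).
have [d0 Hd0] := stab (g := fun d => #|X d|) (fun d => subset_leq_card (Hsub d)).
have /set0Pn [x Hx] := Hne d0.
exists x => d; case: (leqP d0 d) => Hd.
  have Hs : X d \subset X d0 by rewrite -(subnKC Hd) Hmono.
  have HE : X d = X d0 by apply/eqP; rewrite eqEcard Hs /= (Hd0 d Hd).
  by rewrite HE.
have : X d0 \subset X d by rewrite -(subnKC (ltnW Hd)) Hmono.
by move/subsetP; apply.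
Qed.

Section Construction.
Variables (C : Type) (W : (nat -> C) -> Prop) (A : arena C) (S1 : strategy A)
  (M1 : memory A).
Hypothesis HS1 : is_strategy S1.
Hypothesis HM1 : is_M_strategy M1 S1.

Definition out_of (u : node A) : edge A :=
  proj1_sig (constructive_indefinite_description _ (out_edge u)).

Lemma out_ofP u : source (out_of u) = u.
Proof. exact: (proj2_sig (constructive_indefinite_description _ (out_edge u))). Qed.

Definition Ref (m : mstate M1) (u : node A) : Prop :=
  exists ws : node A * seq (edge A), is_fpath ws.1 ws.2 /\ ptarget ws.1 ws.2 = u
    /\ delta_seq (m_init M1) ws.2 = m.

Definition move (m : mstate M1) (u : node A) : edge A :=
  match excluded_middle_informative (Ref m u) with
  | left H => let ws := proj1_sig (constructive_indefinite_description _ H) in S1 ws.1 ws.2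
  | right _ => out_of u
  end.

Lemma move_src m u : u \in V0 A -> source (move m u) = u.
Proof.
move=> Hu; rewrite /move; case: excluded_middle_informative => [H|_]; last exact: out_ofP.
case: (constructive_indefinite_description _ H) => [[w s] [Hp [Ht Hd]]] /=.
simpl in Hp, Ht; rewrite -Ht; apply: HS1 => //; by rewrite Ht.
Qed.

Lemma move_ref w s : is_fpath w s -> ptarget w s \in V0 A ->
  move (delta_seq (m_init M1) s) (ptarget w s) = S1 w s.
Proof.
move=> Hp Hu; rewrite /move; case: excluded_middle_informative => [H|H]; last first.
  by exfalso; apply: H; exists (w, s).
case: (constructive_indefinite_description _ H) => [[w' s'] [Hp' [Ht' Hd']]] /=.
simpl in Hp', Ht', Hd'; by apply: HM1 => //; rewrite Ht'.
Qed.

Definition Win v := winning_from S1 v W.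
Definition st := {ffun node A -> option (mstate M1)}.
Definition f0 : st := [ffun u => if excluded_middle_informative (Win u)
  then Some (m_init M1) else None].
Definition colb (e : edge A) (c : C) : bool :=
  if excluded_middle_informative (col e = c) then true else false.
Definition okb (f : st) (e : edge A) : bool :=
  match f (source e) with
  | Some m => (source e \notin V0 A) || (e == move m (source e))
  | None => false end.
Definition pe (f : st) c u := [pick e | (target e == u) && okb f e && colb e c].
Definition sigm (f : st) c : st := [ffun u =>
  match pe f c u with
  | Some e => omap (fun m => delta m e) (f (source e))
  | None => None end].
Definition M2 : memory A :=
  {| mstate := st; m_init := f0; delta := fun f e => sigm f (col e) |}.

Definition F2 (s : seq (edge A)) : st := @delta_seq C A M2 f0 s.

Definition S2 : strategy A := fun v s =>
  let u := ptarget v s in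
  match F2 s u with
  | Some m => move m u
  | None => out_of u end.

Lemma S2_strat : is_strategy S2.
Proof.
move=> v s Hp Hu; rewrite /S2.
case: (F2 s (ptarget v s)) => [m|]; [exact: move_src | exact: out_ofP].
Qed.

Lemma S2_M : is_M_strategy M2 S2.
Proof. by move=> v1 s1 v2 s2 _ _ Ht _ Hd; rewrite /S2 /F2 Ht Hd. Qed.

Lemma M2_chrom : chromatic M2.
Proof. by exists sigm. Qed.

Lemma M2_card : #|mstate M2| = #|mstate M1|.+1 ^ #|node A|.
Proof. by rewrite /= card_ffun card_option. Qed.

Lemma pe_spec f c u e : pe f c u = Some e ->
  [/\ target e = u, okb f e & col e = c].
Proof.
rewrite /pe; case: pickP => // x /andP [/andP [/eqP Ht Hok] Hc] [<-].
by split=> //; move: Hc; rewrite /colb; case: excluded_middle_informative.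
Qed.

Lemma colb_refl e : colb e (col e).
Proof. by rewrite /colb; case: excluded_middle_informative. Qed.

Section Play.
Variables (v : node A) (p : nat -> edge A).
Hypothesis Hwin : Win v.
Hypothesis H0 : source (p 0) = v.
Hypothesis Hs : forall i, target (p i) = source (p i.+1).
Hypothesis Hv : v \in V0 A -> p 0 = S2 v [::].
Hypothesis Hi : forall i, target (p i) \in V0 A -> p i.+1 = S2 v (mkseq p i.+1).

Definition F k : st := F2 (mkseq p k).

Lemma FS k : F k.+1 = sigm (F k) (col (p k)).
Proof. by rewrite /F /F2 mkseqS /delta_seq foldl_rcons. Qed.

Lemma pS2 k : source (p k) \in V0 A -> p k = S2 v (mkseq p k).
Proof.
case: k => [|k]; first by rewrite H0 => /Hv.
by rewrite -Hs => /Hi.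
Qed.

Lemma I1 k : exists m, F k (source (p k)) = Some m.
Proof.
elim: k => [|k [m Hm]].
  exists (m_init M1); rewrite /F /F2 /= H0 ffunE.
  by case: excluded_middle_informative.
have Hok : okb (F k) (p k).
  rewrite /okb Hm; case: (boolP (source (p k) \in V0 A)) => H //=.
  apply/eqP; rewrite {1}(pS2 H) /S2 (mkseq_path H0 Hs k).2.
  by rewrite -/(F k) Hm.
rewrite FS ffunE; case Hpe: pe => [e|].
  have [_ Hok' _] := pe_spec Hpe; move: Hok'; rewrite /okb.
  by case: (F k (source e)) => // m' _; exists (delta m' e).
move: Hpe; rewrite /pe; case: pickP => // Hn _.
by move: (Hn (p k)); rewrite Hs eqxx Hok colb_refl.
Qed.

Definition alive k u := F k u != None.
Definition par k u := match pe (F k) (col (p k)) u with Some e => source e | None => u end.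

Lemma par_alive k u : alive k.+1 u -> alive k (par k u).
Proof.
rewrite /alive FS ffunE /par; case: pe => [e|] //.
by case: (F k (source e)).
Qed.

Fixpoint ancd k d u := match d with 0 => u | d'.+1 => par k (ancd k.+1 d' u) end.

Lemma ancd_S d k u : ancd k d.+1 u = ancd k d (par (k + d) u).
Proof.
elim: d k => [|d IH] k; first by rewrite /= addn0.
transitivity (par k (ancd k.+1 d (par (k.+1 + d) u))); first by rewrite -IH.
by rewrite addSnnS.
Qed.

Lemma ancd_alive d k u : alive (k + d) u -> alive k (ancd k d u).
Proof.
elim: d k => [|d IH] k; first by rewrite addn0.
by move=> H; apply: par_alive; apply: IH; rewrite addSnnS.
Qed.

Definition D k d : {set node A} := ancd k d @: [set u | alive (k + d) u].

Lemma D_sub k d : D k d.+1 \subset D k d.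
Proof.
apply/subsetP => x /imsetP [u]; rewrite inE => Hu ->.
rewrite ancd_S; apply/imsetP; exists (par (k + d) u) => //.
by rewrite inE; apply: par_alive; rewrite -addnS.
Qed.

Lemma D_ne k d : D k d != set0.
Proof.
apply/set0Pn; exists (ancd k d (source (p (k + d)))); apply: imset_f.
by rewrite inE /alive; case: (I1 (k + d)) => m ->.
Qed.

Definition good k x := forall d, x \in D k d.

Lemma good_alive k x : good k x -> alive k x.
Proof. by move=> H; have /imsetP [u] := H 0; rewrite inE addn0 => Hu ->. Qed.

Lemma good0 : exists x, good 0 x.
Proof. exact: dec_inter (D_sub 0) (D_ne 0). Qed.

Lemma good_child k x : good k x -> exists c, good k.+1 c /\ par k c = x.
Proof.
move=> Hg.
have [c Hc] : exists c, forall d, c \in [set c in D k.+1 d | par k c == x].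
  apply: dec_inter.
  - move=> d; apply/subsetP => y; rewrite !inE => /andP [Hy ->]; rewrite andbT.
    exact: (subsetP (D_sub _ _)).
  - move=> d; apply/set0Pn; have /imsetP [u] := Hg d.+1; rewrite inE => Hu Hx.
    exists (ancd k.+1 d u); rewrite inE Hx /= eqxx andbT; apply: imset_f.
    by rewrite inE addSnnS.
exists c; split.
  by move=> d; move: (Hc d); rewrite inE => /andP [].
by move: (Hc 0); rewrite inE => /andP [_ /eqP].
Qed.

Lemma play_win : W (fun i => col (p i)).
Proof.
have [ch Hch] : exists ch : nat -> node A -> node A,
    forall k x, good k x -> good k.+1 (ch k x) /\ par k (ch k x) = x.
  have H : forall k x, exists c, good k x -> good k.+1 c /\ par k c = x.
    move=> k x; case: (classic (good k x)) => Hg.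
      by have [c Hc] := good_child Hg; exists c.
    by exists x.
  exists (fun k x => proj1_sig (constructive_indefinite_description _ (H k x))).
  move=> k x; exact: (proj2_sig (constructive_indefinite_description _ (H k x))).
have [g0 Hg0] := good0.
pose g := fix g k := match k with 0 => g0 | k'.+1 => ch k' (g k') end.
have Hg : forall k, good k (g k) by elim => //= k IH; exact: (Hch _ _ IH).1.
have Hpar : forall k, par k (g k.+1) = g k by move=> k; exact: (Hch _ _ (Hg k)).2.
have Hpe : forall k, exists e, pe (F k) (col (p k)) (g k.+1) = Some e.
  move=> k; have := good_alive (Hg k.+1); rewrite /alive FS ffunE.
  by case: pe => [e|] //; exists e.
pose p' k := match pe (F k) (col (p k)) (g k.+1) with Some e => e | None => p k end.
have Hp' : forall k, [/\ target (p' k) = g k.+1, okb (F k) (p' k), col (p' k) = col (p k),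
    source (p' k) = g k & F k.+1 (g k.+1) = omap (fun m => delta m (p' k)) (F k (g k))].
  move=> k; have [e He] := Hpe k; rewrite /p' He; have [Ht Hok Hc] := pe_spec He.
  have Hsrc : source e = g k by rewrite -(Hpar k) /par He.
  by split=> //; rewrite FS ffunE He Hsrc.
have Hwin0 : Win (g 0) /\ F 0 (g 0) = Some (m_init M1).
  have := good_alive (Hg 0); rewrite /alive /F /F2 /= ffunE.
  by case: excluded_middle_informative.
have Hmem : forall k, F k (g k) = Some (delta_seq (m_init M1) (mkseq p' k)).
  elim=> [|k IH]; first by rewrite Hwin0.2.
  have [_ _ _ _ ->] := Hp' k; rewrite IH mkseqS /delta_seq foldl_rcons //.
have Hts : forall i, target (p' i) = source (p' i.+1).
  by move=> i; have [-> _ _ _ _] := Hp' i; have [_ _ _ -> _] := Hp' i.+1.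
have Hs0 : source (p' 0) = g 0 by have [_ _ _ -> _] := Hp' 0.
have Hcons : forall k, g k \in V0 A -> p' k = S1 (g 0) (mkseq p' k).
  move=> k Hk; have [_ Hok _ Hsrc _] := Hp' k; move: Hok.
  rewrite /okb Hsrc Hmem Hk /= => /eqP ->.
  have [Hfp Hpt] := mkseq_path Hs0 Hts k; rewrite Hsrc in Hpt.
  rewrite -Hpt; apply: move_ref => //; by rewrite Hpt.
apply: (proj1 Hwin0); exists p'; split.
  split=> //; split=> //; split; first exact: (Hcons 0).
  move=> i; have [-> _ _ _ _] := Hp' i; exact: Hcons.
apply: functional_extensionality => i; by have [_ _ -> _ _] := Hp' i.
Qed.

End Play.

Lemma S2_win v : Win v -> winning_from S2 v W.
Proof.
move=> Hw w [p [[H0 [Hs [Hv Hi]]] ->]]; exact: (play_win Hw H0 Hs Hv Hi).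
Qed.

End Construction.

Theorem corollary1 (C : Type) (W : (nat -> C) -> Prop) (n q : nat)
  (A : arena C) (S1 : strategy A) :
  0 < n -> 0 < q -> #|node A| = n ->
  q_state_strategy q S1 ->
  exists S2 : strategy A,
    chromatic_q_state_strategy (q.+1 ^ n) S2 /\
    forall v : node A, winning_from S1 v W -> winning_from S2 v W.
Proof.
move=> _ _ Hn [HS1 [M1 [Hq HM1]]].
exists (S2 W S1 M1); split; last by move=> v; exact: S2_win.
split; first exact: S2_strat.
exists (M2 W S1 M1); split; first by rewrite M2_card Hq Hn.
by split; [exact: M2_chrom | exact: S2_M].
Qed.
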